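(* Let $\mathbb{R}^n$ carry a norm $\|\cdot\|$, $Q\subseteq\mathbb{R}^n$ closed convex, $f:Q\to\mathbb{R}$ convex, continuous, differentiable with $\|\nabla f(x)-\nabla f(y)\|_*\le L\|x-y\|$ on $Q$, $h$ convex on $Q$, and let $F=f+h$ attain its minimum over $Q$ at $x_*$. Let $d$ be a prox-function with Bregman divergence $V$, $x_0\in Q$, $V(x_*,x_0)\le R^2$. Suppose only a $(\delta,L)$-oracle for $f$ is available and run the mirror triangle method with inexact $(\delta,L)$-oracle (see context) with starting point $x_0$, $N\ge1$ steps, the value $\delta$, and $0<L_0\le L$. Then $$F(x_N)-F(x_* )\le\frac{8LR^2}{(N+1)^2}+2N\delta.$$
   Context: $\|\lambda\|_*=\max_{\|\nu\|\le1}\langle\lambda,\nu\rangle$. Prox-function: continuously differentiable $d:Q\to\mathbb{R}$, $1$-strongly convex w.r.t. $\|\cdot\|$; $V(x,y)=d(x)-d(y)-\langle\nabla d(y),x-y\rangle$. A $(\delta,L)$-oracle returns for each query point $y\in Q$ a pair $(f_\delta(y),\nabla f_\delta(y))\in\mathbb{R}\times\mathbb{R}^n$ with $0\le f(x)-f_\delta(y)-\langle\nabla f_\delta(y),x-y\rangle\le\frac L2\|x-y\|^2+\delta$ for all $x\in Q$. Method: $y_0=u_0=x_0$, $L_1=L_0/2$, $\alpha_0=A_0=0$. Step $k+1$ ($k=0,\dots,N-1$) with current $L_{k+1}$: (i) $\alpha_{k+1}$ is the largest root of $A_k+\alpha=L_{k+1}\alpha^2$, $A_{k+1}=A_k+\alpha_{k+1}$;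 (ii) $y_{k+1}=(\alpha_{k+1}u_k+A_kx_k)/A_{k+1}$; (iii) $u_{k+1}=\arg\min_{x\in Q}\{V(x,u_k)+\alpha_{k+1}(f_\delta(y_{k+1})+\langle\nabla f_\delta(y_{k+1}),x-y_{k+1}\rangle+h(x))\}$; (iv) $x_{k+1}=(\alpha_{k+1}u_{k+1}+A_kx_k)/A_{k+1}$; (v) if $f_\delta(x_{k+1})\le f_\delta(y_{k+1})+\langle\nabla f_\delta(y_{k+1}),x_{k+1}-y_{k+1}\rangle+\frac{L_{k+1}}2\|x_{k+1}-y_{k+1}\|^2+\delta$, set $L_{k+2}=L_{k+1}/2$ and go to the next step; otherwise replace $L_{k+1}$ by $2L_{k+1}$ and repeat step $k+1$ from (i). *)

(* Defs.v *)
From mathcomp Require Import all_boot all_order all_algebra.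
From mathcomp Require Import classical_sets reals.
Set Implicit Arguments. Unset Strict Implicit. Unset Printing Implicit Defensive.
Import Order.TTheory GRing.Theory Num.Theory.
Local Open Scope classical_set_scope.
Local Open Scope ring_scope.

Section Defs.
Variables (R : realType) (n : nat).
Notation vec := 'rV[R]_n.

Definition dot (u v : vec) : R := \sum_(i < n) u 0 i * v 0 i.

Definition is_norm (nrm : vec -> R) : Prop :=
  [/\ forall x, 0 <= nrm x,
      forall x, nrm x = 0 -> x = 0,
      forall (a : R) x, nrm (a *: x) = `|a| * nrm x
    & forall x y, nrm (x + y) <= nrm x + nrm y].

Definition dualnorm (nrm : vec -> R) (l : vec) : R :=
  sup [set dot l nu | nu in [set nu | nrm nu <= 1]].

Definition convex_set (Q : set vec) : Prop :=
  forall x y (t : R), Q x -> Q y -> 0 <= t <= 1 -> Q (t *: x + (1 - t) *: y).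

Definition closed_set (nrm : vec -> R) (Q : set vec) : Prop :=
  forall x, (forall e : R, 0 < e -> exists2 q, Q q & nrm (q - x) < e) -> Q x.

Definition convex_on (Q : set vec) (f : vec -> R) : Prop :=
  forall x y (t : R), Q x -> Q y -> 0 <= t <= 1 ->
    f (t *: x + (1 - t) *: y) <= t * f x + (1 - t) * f y.

Definition strongly_convex_on (nrm : vec -> R) (Q : set vec) (f : vec -> R) : Prop :=
  forall x y (t : R), Q x -> Q y -> 0 <= t <= 1 ->
    f (t *: x + (1 - t) *: y) <= t * f x + (1 - t) * f y
                                   - t * (1 - t) / 2 * nrm (x - y) ^+ 2.

Definition continuous_on (nrm : vec -> R) (Q : set vec) (f : vec -> R) : Prop :=
  forall x, Q x -> forall e : R, 0 < e -> exists2 d : R, 0 < d &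
    forall y, Q y -> nrm (y - x) < d -> `|f y - f x| < e.

Definition vcontinuous_on (nrm : vec -> R) (Q : set vec) (g : vec -> vec) : Prop :=
  forall x, Q x -> forall e : R, 0 < e -> exists2 d : R, 0 < d &
    forall y, Q y -> nrm (y - x) < d -> nrm (g y - g x) < e.

Definition gradient_on (nrm : vec -> R) (Q : set vec) (f : vec -> R) (g : vec -> vec)
  : Prop :=
  forall x, Q x -> forall e : R, 0 < e -> exists2 d : R, 0 < d &
    forall y, Q y -> nrm (y - x) < d ->
      `|f y - f x - dot (g x) (y - x)| <= e * nrm (y - x).

Definition bregman (d : vec -> R) (gd : vec -> vec) (x y : vec) : R :=
  d x - d y - dot (gd y) (x - y).

Definition dL_oracle (nrm : vec -> R) (Q : set vec) (f : vec -> R)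
  (delta L : R) (fd : vec -> R) (gfd : vec -> vec) : Prop :=
  forall x y, Q x -> Q y ->
    0 <= f x - fd y - dot (gfd y) (x - y) <= L / 2 * nrm (x - y) ^+ 2 + delta.

(* One trial of steps (i)-(iv) with current constant M, from (A_k, x_k, u_k):
   outputs alpha_{k+1}, A_{k+1}, y_{k+1}, u_{k+1}, x_{k+1}. *)
Definition mtm_trial (Q : set vec) (V : vec -> vec -> R) (h : vec -> R)
  (fd : vec -> R) (gfd : vec -> vec) (M Ak : R) (xk uk : vec)
  (al A' : R) (y u' x' : vec) : Prop :=
  [/\ Ak + al = M * al ^+ 2 /\ (forall b, Ak + b = M * b ^+ 2 -> b <= al),
      A' = Ak + al,
      y = A'^-1 *: (al *: uk + Ak *: xk),
      Q u' /\ (forall z, Q z ->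
         V u' uk + al * (fd y + dot (gfd y) (u' - y) + h u')
         <= V z uk + al * (fd y + dot (gfd y) (z - y) + h z))
    & x' = A'^-1 *: (al *: u' + Ak *: xk)].

Definition mtm_test (nrm : vec -> R) (fd : vec -> R) (gfd : vec -> vec)
  (delta M : R) (y x' : vec) : Prop :=
  fd x' <= fd y + dot (gfd y) (x' - y) + M / 2 * nrm (x' - y) ^+ 2 + delta.

(* Lcur k is the value of
   L_{k+1} when step k+1 is entered; j k is the number of doublings performed
   at step k+1, so that the accepted constant is Lcur k * 2^(j k). *)
Definition mtm_run (nrm : vec -> R) (Q : set vec) (d : vec -> R) (gd : vec -> vec)
  (h : vec -> R) (fd : vec -> R) (gfd : vec -> vec) (delta L0 : R) (x0 : vec)
  (N : nat) (A : nat -> R) (x u : nat -> vec) (Lcur : nat -> R) (j : nat -> nat)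
  : Prop :=
  let V := bregman d gd in
  [/\ [/\ A 0%N = 0, x 0%N = x0, u 0%N = x0 & Lcur 0%N = L0 / 2],
      (forall k, (k < N)%N -> Lcur k.+1 = Lcur k * 2 ^+ j k / 2),
      (forall k, (k < N)%N -> forall i, (i < j k)%N ->
         exists al A' y u' x',
           mtm_trial Q V h fd gfd (Lcur k * 2 ^+ i) (A k) (x k) (u k) al A' y u' x'
           /\ ~ mtm_test nrm fd gfd delta (Lcur k * 2 ^+ i) y x')
    & (forall k, (k < N)%N ->
         exists al y,
           mtm_trial Q V h fd gfd (Lcur k * 2 ^+ j k) (A k) (x k) (u k)
                     al (A k.+1) y (u k.+1) (x k.+1)
           /\ mtm_test nrm fd gfd delta (Lcur k * 2 ^+ j k) y (x k.+1))].

End Defs.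

(* Main.v *)
Require Import Defs.
From mathcomp Require Import all_boot all_order all_algebra.
From mathcomp Require Import classical_sets reals.
From mathcomp Require Import ring lra.
Import Order.TTheory GRing.Theory Num.Theory.
Local Open Scope classical_set_scope.
Local Open Scope ring_scope.

Section Aux.
Variables (R : realType) (n : nat).
Notation vec := 'rV[R]_n.

Lemma dotDr (c u v : vec) : dot c (u + v) = dot c u + dot c v.
Proof. rewrite /dot -big_split /=; apply: eq_bigr => i _; by rewrite mxE mulrDr. Qed.

Lemma dotZr (c u : vec) (a : R) : dot c (a *: u) = a * dot c u.
Proof. rewrite /dot mulr_sumr; apply: eq_bigr => i _; rewrite mxE; ring. Qed.

Lemma comb_sub (t : R) (x y p : vec) :
  (t *: x + (1 - t) *: y) - p = t *: (x - p) + (1 - t) *: (y - p).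
Proof. apply/rowP => i; rewrite !mxE; ring. Qed.

Lemma comb_w (t : R) (x y : vec) : (t *: x + (1 - t) *: y) - y = t *: (x - y).
Proof. apply/rowP => i; rewrite !mxE; ring. Qed.

Lemma dot_comb (c x y p : vec) (t : R) :
  dot c ((t *: x + (1 - t) *: y) - p) = t * dot c (x - p) + (1 - t) * dot c (y - p).
Proof. rewrite /dot !mulr_sumr -big_split /=; apply: eq_bigr => i _; rewrite !mxE; ring. Qed.

Lemma le_lim (a b : R) : (forall e, 0 < e -> b - e <= a) -> b <= a.
Proof.
move=> H; rewrite leNgt; apply/negP => Hab.
have := H ((b - a)/2); rewrite divr_gt0 ?subr_gt0 // => /(_ isT); lra.
Qed.

Variable nrm : vec -> R.
Hypothesis Hn : is_norm nrm.

Lemma nrm_ge0 v : 0 <= nrm v. Proof. by case: Hn. Qed.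
Lemma nrmZ (a : R) v : nrm (a *: v) = `|a| * nrm v. Proof. by case: Hn. Qed.

Lemma seg {Q : set vec} {d : vec -> R} {gd : vec -> vec} :
  convex_set Q -> gradient_on nrm Q d gd -> forall {x y}, Q x -> Q y ->
  forall {e s : R}, 0 < e -> 0 < s <= 1 ->
  exists t : R, [/\ 0 < t <= s, Q (t *: x + (1 - t) *: y) &
    `|d (t *: x + (1 - t) *: y) - d y - t * dot (gd y) (x - y)| <= e * t].
Proof.
move=> cQ gr x y Qx Qy e s e0 /andP[s0 s1].
set K := nrm (x - y).
have K0 : 0 <= K by apply: nrm_ge0.
have [del del0 H] := gr y Qy (e / (K + 1)) (divr_gt0 e0 (ltr_pwDr ltr01 K0)).
pose t := s * del / (del + K + 1).
have D0 : 0 < del + K + 1 by lra.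
have t0 : 0 < t by rewrite /t divr_gt0 // mulr_gt0.
have ts : t <= s.
  by rewrite /t ler_pdivrMr // ler_pM2l //; lra.
have Qw : Q (t *: x + (1 - t) *: y) by apply: cQ => //; apply/andP; split; lra.
exists t; split => //; first by rewrite t0 ts.
have nw : nrm (t *: x + (1 - t) *: y - y) = t * K by rewrite comb_w nrmZ gtr0_norm.
have tK : t * K < del.
  have h : 0 <= del * K * (1 - s) by rewrite !mulr_ge0 // ?subr_ge0 // ltW.
  rewrite /t mulrAC ltr_pdivrMr //; nra.
have := H _ Qw; rewrite nw => /(_ tK).
rewrite comb_w.
rewrite (_ : dot (gd y) (t *: (x - y)) = t * dot (gd y) (x - y)); last exact: dotZr.
move=> H1; apply: (le_trans H1).
have -> : e / (K + 1) * (t * K) = (e * t * K) / (K + 1) by field; lra.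
rewrite ler_pdivrMr; last lra.
have : 0 <= e * t by rewrite mulr_ge0 // ltW.
nra.
Qed.


Lemma three_point (Q : set vec) (d : vec -> R) (gd : vec -> vec) (psi : vec -> R) u z :
  convex_set Q -> gradient_on nrm Q d gd -> Q u -> Q z ->
  (forall w, Q w -> psi u <= psi w) ->
  (forall t, 0 <= t <= 1 -> psi (t *: z + (1 - t) *: u) - d (t *: z + (1 - t) *: u)
                 <= t * (psi z - d z) + (1 - t) * (psi u - d u)) ->
  bregman d gd z u <= psi z - psi u.
Proof.
move=> cQ gr Qu Qz Hmin Hcv; apply: le_lim => e e0.
have [t [/andP[t0 t1] Qw H]] := seg cQ gr Qz Qu e0 (ltac:(apply/andP; split; [exact: ltr01| exact: lexx])).
have h1 := Hmin _ Qw.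
have h2 := Hcv t (ltac:(apply/andP; split; lra)).
move/ler_normlP: H => [_ H].
have h : 0 <= t * (dot (gd u) (z - u) + e + psi z - d z - psi u + d u) by lra.
rewrite pmulr_rge0 // in h.
rewrite /bregman; lra.
Qed.

Lemma breg_lb (Q : set vec) (d : vec -> R) (gd : vec -> vec) x y :
  convex_set Q -> gradient_on nrm Q d gd -> strongly_convex_on nrm Q d -> Q x -> Q y ->
  nrm (x - y) ^+ 2 / 2 <= bregman d gd x y.
Proof.
move=> cQ gr sc Qx Qy; apply: le_lim => e e0.
set K2 := nrm (x - y) ^+ 2.
have K20 : 0 <= K2 by rewrite /K2 sqr_ge0.
pose s := e / (K2 + e).
have s0 : 0 < s by rewrite divr_gt0 //; lra.
have s1 : s <= 1 by rewrite /s ler_pdivrMr; lra.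
have sK : s * K2 <= e by rewrite /s mulrAC ler_pdivrMr; nra.
have e20 : 0 < e / 2 by lra.
have [t [/andP[t0 ts] Qw H]] := seg cQ gr Qx Qy e20 (s:=s) (ltac:(apply/andP; split; lra)).
have tK : t * K2 <= s * K2 by apply: ler_wpM2r.
have h2 := sc x y t Qx Qy (ltac:(apply/andP; split; lra)).
move/ler_normlP: H => [H _].
have h : 0 <= t * (d x - d y - dot (gd y) (x - y) + e / 2 - (1 - t) / 2 * K2) by rewrite /K2; lra.
rewrite pmulr_rge0 // in h.
rewrite /bregman; lra.
Qed.


Lemma dot0r (c : vec) : dot c 0 = 0.
Proof. rewrite /dot big1 // => i _; by rewrite mxE mulr0. Qed.

Lemma nrm0 : nrm 0 = 0.
Proof. by rewrite -(scale0r (0 : vec)) nrmZ normr0 mul0r. Qed.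

Lemma trial_facts (Q : set vec) V h fd gfd (M Ak : R) (xk uk : vec) al A' (y u' x' : vec) :
  convex_set Q -> Q xk -> Q uk -> 0 <= Ak -> 0 < M ->
  mtm_trial Q V h fd gfd M Ak xk uk al A' y u' x' ->
  [/\ 1 / (2 * M) <= al, A' = Ak + al, M * al ^+ 2 = A',
      y = (al / A') *: uk + (1 - al / A') *: xk &
      x' = (al / A') *: u' + (1 - al / A') *: xk] /\ [/\ Q y, Q x' & Q u'].
Proof.
move=> cQ Qx Qu A0 M0 [[Heq Hmax] EA Ey [Qu' Hmin] Ex].
have Mn : M != 0 by rewrite gt_eqF.
have al0 : 1 / (2 * M) <= al.
  have := Hmax (1 / M - al).
  have -> : M * (1 / M - al) ^+ 2 = 1 / M - 2 * al + M * al ^+ 2 by field.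
  have -> : 1 / (2 * M) = (1 / M) / 2 by field.
  move=> H; have := H (ltac:(lra)); lra.
have iM : 0 < 1 / (2 * M) by rewrite divr_gt0 // mulr_gt0.
have A'0 : 0 < A' by lra.
have nz : A' != 0 by rewrite gt_eqF.
have a01 : 0 <= al / A' <= 1.
  apply/andP; split; first by rewrite divr_ge0 //; lra.
  rewrite ler_pdivrMr //; lra.
have Ey' : y = (al / A') *: uk + (1 - al / A') *: xk.
  rewrite Ey; apply/rowP => i; rewrite !mxE.
  have -> : Ak = A' - al by lra.
  by field.
have Ex' : x' = (al / A') *: u' + (1 - al / A') *: xk.
  rewrite Ex; apply/rowP => i; rewrite !mxE.
  have -> : Ak = A' - al by lra.
  by field.
split; first by split => //; rewrite EA Heq.
split => //; [rewrite Ey' | rewrite Ex']; exact: cQ.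
Qed.

Arguments trial_facts {Q V h fd gfd M Ak xk uk al A' y u' x'}.
Arguments three_point {Q d gd psi u z}.

Lemma test_ok (Q : set vec) f fd gfd (delta L M : R) (y x' : vec) :
  dL_oracle nrm Q f delta L fd gfd -> Q y -> Q x' -> L <= M ->
  mtm_test nrm fd gfd delta M y x'.
Proof.
move=> Ho Qy Qx LM; rewrite /mtm_test.
have /andP[h1 _] := Ho x' x' Qx Qx.
have /andP[_ h2] := Ho x' y Qx Qy.
rewrite subrr dot0r in h1.
have : L / 2 * nrm (x' - y) ^+ 2 <= M / 2 * nrm (x' - y) ^+ 2.
  apply: ler_wpM2r; first by rewrite sqr_ge0.
  lra.
lra.
Qed.


Lemma one_step (Q : set vec) f h d gd fd gfd (delta L M Ak : R) (xk uk : vec) al A'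
  (y u' x' xs : vec) :
  convex_set Q -> gradient_on nrm Q d gd -> strongly_convex_on nrm Q d -> convex_on Q h ->
  dL_oracle nrm Q f delta L fd gfd -> Q xk -> Q uk -> Q xs -> 0 <= Ak -> 0 < M ->
  mtm_trial Q (bregman d gd) h fd gfd M Ak xk uk al A' y u' x' ->
  mtm_test nrm fd gfd delta M y x' ->
  A' * (f x' + h x' - (f xs + h xs)) + bregman d gd xs u' <=
  Ak * (f xk + h xk - (f xs + h xs)) + bregman d gd xs uk + 2 * A' * delta.
Proof.
move=> cQ gr sc ch Ho Qx Qu Qs A0 M0 Htr Ht.
have [[al0 EA Hm Ey Ex] [Qy Qx' Qu']] := trial_facts cQ Qx Qu A0 M0 Htr.
case: Htr => _ _ _ [_ Hmin] _.
have iM : 0 < 1 / (2 * M) by rewrite divr_gt0 // mulr_gt0.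
have alp : 0 < al by lra.
have A'0 : 0 < A' by lra.
have a01 : 0 <= al / A' <= 1.
  apply/andP; split; first by rewrite divr_ge0 //; lra.
  rewrite ler_pdivrMr //; lra.
set a := al / A' in Ey Ex a01.
set g := gfd y in Ht Hmin *.
set K := nrm (u' - uk).
have o1 : f x' <= fd x' + delta.
  have /andP[_ h2] := Ho x' x' Qx' Qx'.
  rewrite subrr dot0r nrm0 expr2 !mulr0 in h2; lra.
have dc : dot g (x' - y) = a * dot g (u' - y) + (1 - a) * dot g (xk - y).
  by rewrite Ex dot_comb.
have hcv : h x' <= a * h u' + (1 - a) * h xk by rewrite Ex; apply: ch.
have lk : fd y + dot g (xk - y) <= f xk.
  have /andP[h1 _] := Ho xk y Qx Qy; rewrite /g; lra.
have lz : fd y + dot g (xs - y) <= f xs.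
  have /andP[h1 _] := Ho xs y Qs Qy; rewrite /g; lra.
have nr : nrm (x' - y) = a * K.
  rewrite Ex Ey.
  have -> : (a *: u' + (1 - a) *: xk) - (a *: uk + (1 - a) *: xk) = a *: (u' - uk).
    by apply/rowP => i; rewrite !mxE; ring.
  by rewrite nrmZ ger0_norm //; case/andP: a01.
have bl := breg_lb Q d gd u' uk cQ gr sc Qu' Qu.
have tp := three_point
  (psi := fun w => bregman d gd w uk + al * (fd y + dot g (w - y) + h w)) cQ gr Qu' Qs Hmin.
have tp' : bregman d gd xs u' <=
   (bregman d gd xs uk + al * (fd y + dot g (xs - y) + h xs)) -
   (bregman d gd u' uk + al * (fd y + dot g (u' - y) + h u')).
  apply: tp => t t01.
  rewrite /bregman !dot_comb.
  have := ch xs u' t Qs Qu' t01.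
  move/(ler_wpM2l (ltW alp)) => hh.
  lra.
rewrite /mtm_test nr -/g in Ht.
have E1 : f x' + h x' <= a * (fd y + dot g (u' - y) + h u') + (1 - a) * (f xk + h xk)
                         + M / 2 * (a * K) ^+ 2 + 2 * delta.
  have a1 : 0 <= 1 - a by case/andP: a01 => _ ?; lra.
  have lk2 := ler_wpM2l a1 lk. lra.
have E2 := ler_wpM2l (ltW A'0) E1.
have HM : M = A' / al ^+ 2 by rewrite -Hm; field; rewrite gt_eqF.
have E3 : A' * (a * (fd y + dot g (u' - y) + h u') + (1 - a) * (f xk + h xk)
                         + M / 2 * (a * K) ^+ 2 + 2 * delta) =
  al * (fd y + dot g (u' - y) + h u') + Ak * (f xk + h xk) + K ^+ 2 / 2 + 2 * A' * delta.
  rewrite /a HM (_ : Ak = A' - al); last lra.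
  by field; rewrite !gt_eqF.
have lz' := ler_wpM2l (ltW alp) lz.
rewrite E3 in E2.
rewrite -/K in bl.
rewrite EA in E2 *.
lra.
Qed.

Arguments test_ok {Q f fd gfd delta L M y x'}.
Arguments one_step {Q f h d gd fd gfd delta L M Ak xk uk al A' y u' x' xs}.

End Aux.
Arguments dot0r {R n}.
Arguments nrm0 {R n nrm}.
Arguments trial_facts {R n Q V h fd gfd M Ak xk uk al A' y u' x'}.
Arguments test_ok {R n nrm Q f fd gfd delta L M y x'}.
Arguments one_step {R n nrm} Hn {Q f h d gd fd gfd delta L M Ak xk uk al A' y u' x' xs}.
Arguments breg_lb {R n nrm} Hn Q d gd x y.

Lemma le_sqrt (R : realType) (a b : R) : 0 <= a -> a ^+ 2 <= b -> a <= Num.sqrt b.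
Proof. move=> a0 ab. have b0 : 0 <= b by apply: le_trans ab; rewrite sqr_ge0.
by rewrite -(ger0_norm a0) -sqrtr_sqr ler_sqrt. Qed.
Lemma sqrt_step (R : realType) (p q r t : R) : 0 <= q -> 0 <= r -> 0 < p -> q ^+ 2 <= p ^+ 2 ->
  4 * r ^+ 2 * p ^+ 2 <= (p ^+ 2 - q ^+ 2) ^+ 2 -> r * t <= q -> r * (t + 1) <= p.
Proof.
move=> q0 r0 p0 qp H rq.
have pq : q <= p by nra.
have X : 2 * r * p <= p ^+ 2 - q ^+ 2.
  rewrite leNgt; apply/negP => hlt.
  have h0 : 0 <= p ^+ 2 - q ^+ 2 by lra.
  have : (p ^+ 2 - q ^+ 2) ^+ 2 < (2 * r * p) ^+ 2.
    rewrite ltr_pXn2r //; nra.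
  nra.
have : 0 <= (p - q - r) * (p + q) by nra.
rewrite pmulr_lge0; [lra| lra].
Qed.

Theorem theorem3 (R : realType) (n : nat) (nrm : 'rV[R]_n -> R)
  (Q : set 'rV[R]_n) (f h : 'rV[R]_n -> R) (gf : 'rV[R]_n -> 'rV[R]_n) (L : R)
  (xstar : 'rV[R]_n) (d : 'rV[R]_n -> R) (gd : 'rV[R]_n -> 'rV[R]_n)
  (x0 : 'rV[R]_n) (Rad : R) (delta : R) (fd : 'rV[R]_n -> R)
  (gfd : 'rV[R]_n -> 'rV[R]_n) (N : nat) (L0 : R)
  (A : nat -> R) (x u : nat -> 'rV[R]_n) (Lcur : nat -> R) (j : nat -> nat) :
  is_norm nrm ->
  closed_set nrm Q -> convex_set Q ->
  convex_on Q f -> continuous_on nrm Q f -> gradient_on nrm Q f gf ->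
  (forall y z, Q y -> Q z -> dualnorm nrm (gf y - gf z) <= L * nrm (y - z)) ->
  convex_on Q h ->
  Q xstar -> (forall z, Q z -> f xstar + h xstar <= f z + h z) ->
  gradient_on nrm Q d gd -> vcontinuous_on nrm Q gd -> strongly_convex_on nrm Q d ->
  Q x0 -> bregman d gd xstar x0 <= Rad ^+ 2 ->
  dL_oracle nrm Q f delta L fd gfd ->
  (1 <= N)%N -> 0 < L0 -> L0 <= L ->
  mtm_run nrm Q d gd h fd gfd delta L0 x0 N A x u Lcur j ->
  (f (x N) + h (x N)) - (f xstar + h xstar)
    <= 8 * L * Rad ^+ 2 / (N.+1%:R) ^+ 2 + 2 * N%:R * delta.
Proof.
move=> Hn _ cQ _ _ _ _ hcv Qs _ dgrad _ dsc Qx0 HR Ho N1 L00 L0L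
  [[A0 X0 U0 Lc0] HLc Hfail Hacc].
have dl0 : 0 <= delta.
  have /andP[h1 h2] := Ho x0 x0 Qx0 Qx0.
  rewrite subrr dot0r (nrm0 Hn) expr2 !mulr0 in h1 h2; lra.
have L0' : 0 < L by lra.
set Fs := f xstar + h xstar.
pose c := 1 / (8 * L).
have c0 : 0 < c by rewrite divr_gt0 //; lra.
pose r := Num.sqrt c.
have r0 : 0 <= r by apply: sqrtr_ge0.
have r2 : r ^+ 2 = c by rewrite sqr_sqrtr // ltW.
pose P k := [/\ (Q (x k) /\ Q (u k)), 0 <= A k, (0 < Lcur k /\ Lcur k <= L),
  A k * (f (x k) + h (x k) - Fs) + bregman d gd xstar (u k)
     <= Rad ^+ 2 + 2 * k%:R * A k * delta
  & ((1 <= k)%N -> r * (k.+1)%:R <= Num.sqrt (A k))].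
have HP : forall k, (k <= N)%N -> P k.
  elim => [|k IH] Hk.
    rewrite /P X0 U0 A0 Lc0; split => //; try lra.
  have Hk' : (k < N)%N := Hk.
  have [[Qx Qu] A0k [Lc0k LckL] Phi Sq] := IH (ltnW Hk).
  have [al [y [Htr Ht]]] := Hacc k Hk'.
  have M0 : 0 < Lcur k * 2 ^+ j k by rewrite mulr_gt0 // exprn_gt0.
  have M2L : Lcur k * 2 ^+ j k <= 2 * L.
    case Ej: (j k) => [|i]; first by rewrite expr0 mulr1; lra.
    have [al' [A'' [y' [u'' [x'' [Htr' Hnt]]]]]] := Hfail k Hk' i (ltac:(by rewrite Ej)).
    have M'0 : 0 < Lcur k * 2 ^+ i by rewrite mulr_gt0 // exprn_gt0.
    have [_ [Qy' Qx'' _]] := trial_facts cQ Qx Qu A0k M'0 Htr'.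
    have lt : Lcur k * 2 ^+ i < L.
      rewrite ltNge; apply/negP => HL; apply: Hnt; exact: test_ok Ho Qy' Qx'' HL.
    rewrite exprS; lra.
  have [[al0 EA Hm _ _] [Qy Qx1 Qu1]] := trial_facts cQ Qx Qu A0k M0 Htr.
  have step := one_step Hn cQ dgrad dsc hcv Ho Qx Qu Qs A0k M0 Htr Ht.
  have Elc := HLc k Hk'.
  set M := Lcur k * 2 ^+ j k in M0 M2L Hm al0 Elc.
  have iM : 0 < 1 / (2 * M) by rewrite divr_gt0 // mulr_gt0.
  have alp : 0 < al by lra.
  have AkA : A k <= A k.+1 by lra.
  split => //.
  - lra.
  - split; lra.
  - have hh : k%:R * (A k * delta) <= k%:R * (A k.+1 * delta).
      by apply: ler_wpM2l; [rewrite ler0n | apply: ler_wpM2r].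
    rewrite -natr1; rewrite /Fs in Phi step *; lra.
  - move=> _.
    have [k0|kpos] := posnP k.
      subst k; rewrite A0 add0r in EA.
      apply: le_sqrt; first by rewrite mulr_ge0.
      rewrite EA exprMn r2.
      have hM : M * al = 1.
        have : al * (M * al - 1) = 0.
          rewrite EA in Hm; rewrite (_ : al * (M * al - 1) = M * al ^+ 2 - al); last by ring.
          by rewrite Hm subrr.
        move/eqP; rewrite mulf_eq0 gt_eqF //= subr_eq0 => /eqP; done.
      have cL : c * (8 * L) = 1 by rewrite /c; field; rewrite gt_eqF //; lra.
      have : 1 <= al * (2 * L) by nra.
      nra.
    have Sqk := Sq kpos.
    rewrite -natr1.
    have sA : Num.sqrt (A k) ^+ 2 = A k by rewrite sqr_sqrtr.
    have sA' : Num.sqrt (A k.+1) ^+ 2 = A k.+1 by rewrite sqr_sqrtr //; lra.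
    apply: sqrt_step Sqk; first exact: sqrtr_ge0.
    + exact: r0.
    + by rewrite sqrtr_gt0; lra.
    + by rewrite sA sA'.
    rewrite sA sA' r2.
    have hA : A k.+1 <= 2 * L * al ^+ 2.
      rewrite -Hm; apply: ler_wpM2r => //; exact: sqr_ge0.
    have e1 : 8 * (c * (L * al ^+ 2)) = al ^+ 2 by rewrite /c; field; rewrite gt_eqF.
    have := ler_wpM2l (ltW c0) hA.
    have -> : A k.+1 - A k = al by lra.
    nra.
have [[_ QuN] AN _ PhiN SqN] := HP N (leqnn N).
have Vg : 0 <= bregman d gd xstar (u N).
  apply: le_trans (breg_lb Hn Q d gd xstar (u N) cQ dgrad dsc Qs QuN).
  by rewrite divr_ge0 // sqr_ge0.
have sqN := SqN N1.
have cT : c * (N.+1%:R) ^+ 2 <= A N.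
  rewrite -r2 -exprMn -(sqr_sqrtr AN).
  rewrite ler_pXn2r ?nnegrE ?sqrtr_ge0 ?mulr_ge0 //.
have T0 : 0 < (N.+1%:R : R) ^+ 2 by rewrite exprn_gt0 // ltr0n.
have cL : c * (8 * L) = 1 by rewrite /c; field; rewrite gt_eqF //; lra.
have ANp : 0 < A N.
  apply: lt_le_trans cT; by rewrite mulr_gt0.
set G := f (x N) + h (x N) - Fs.
set B := 8 * L * Rad ^+ 2 / (N.+1%:R) ^+ 2.
have BA : Rad ^+ 2 <= B * A N.
  rewrite /B mulrAC ler_pdivlMr //.
  have R0 : 0 <= Rad ^+ 2 by exact: sqr_ge0.
  have h8 : (N.+1%:R : R) ^+ 2 <= 8 * L * A N.
    have L8 : 0 <= 8 * L by lra.
    have := ler_wpM2l L8 cT.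
    have -> : 8 * L * (c * N.+1%:R ^+ 2) = N.+1%:R ^+ 2.
      by rewrite mulrA (mulrC (8 * L)) cL mul1r.
    done.
  have := ler_wpM2l R0 h8.
  lra.
have AG : A N * G <= A N * (B + 2 * N%:R * delta).
  rewrite -/G in PhiN; lra.
by rewrite ler_pM2l in AG.
Qed.
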